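(* Let $\omega\colon\mathbf Z_+\to(0,+\infty)$ be a weight which is bounded from below, such that $\mathcal T$ is bounded on $\mathcal X_\omega$, and such that there exists $\rho>1$ for which the sequence $(\rho^n/\omega(k2^n))_{n\ge0}$ is bounded for every $k\ge3$. Then $\mathcal T$ satisfies the Godefroy–Shapiro Criterion on $\mathcal X_\omega$, i.e. both subspaces $\mathrm{span}[\ker(\mathcal T-\mu);\ |\mu|<1]$ and $\mathrm{span}[\ker(\mathcal T-\mu);\ |\mu|>1]$ are dense in $\mathcal X_\omega$. In particular this holds for $\omega=\omega_0$, $\omega_0(n)=(n+1)/\pi$ (with $\rho=2$).
   Context: $T\colon\mathbf Z_+\to\mathbf Z_+$ is the modified Collatz map: $T(n)=n/2$ for $n$ even, $T(n)=(3n+1)/2$ for $n$ odd. $\mathcal X_\omega$ is the Hilbert space of holomorphic functions $f(z)=\sum_{n\ge3}c_nz^n$ on the unit disk with $\|f\|_\omega^2=\sum_{n\ge3}|c_n|^2/\omega(n)<\infty$. $\mathcal T\sum_{n\ge3}c_nz^n=\sum_{j\ge3,\,T(j)\ge3}c_jz^{T(j)}$. $\mathcal T$ is bounded on $\mathcal X_\omega$ iff the sequences $\omega(6m)/\omega(3m)$, $\omega(6m+2)/\omega(3m+1)$, $(\omega(6m+4)+\omega(2m+1))/\omega(3m+2)$ ($m\ge1$) are bounded; this holds for $\omega_0$. *)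

(* Defs.v *)
From Stdlib Require Import Reals Lra Lia Arith List.
From Coquelicot Require Import Coquelicot.
Open Scope R_scope.

Definition collatz (n : nat) : nat :=
  if Nat.even n then Nat.div n 2 else Nat.div (3 * n + 1) 2.

(* Elements of X_omega are represented by their Taylor coefficient sequences
   c : nat -> C, with c n = 0 for n < 3 (f(z) = sum_{n>=3} c_n z^n). *)
Definition wterm (omega : nat -> R) (c : nat -> C) (n : nat) : R :=
  if (3 <=? n)%nat then (Cmod (c n)) ^ 2 / omega n else 0.

Definition inX (omega : nat -> R) (c : nat -> C) : Prop :=
  (forall n, (n < 3)%nat -> c n = 0%C) /\ ex_series (wterm omega c).

Definition wnorm (omega : nat -> R) (c : nat -> C) : R :=
  sqrt (Series (wterm omega c)).

Definition csub (c d : nat -> C) : nat -> C := fun n => (c n - d n)%C.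

(* The operator cal T: (T c)_m = sum_{j >= 3, T(j) = m} c_j for m >= 3, and 0
   for m < 3.  Since T(j) >= j/2, only j <= 2m contribute. *)
Definition Top (c : nat -> C) : nat -> C :=
  fun m => if (3 <=? m)%nat then
             sum_n_m (fun j => if Nat.eqb (collatz j) m then c j else zero) 3 (2 * m)
           else 0%C.

Definition T_bounded (omega : nat -> R) : Prop :=
  exists M : R, forall c, inX omega c ->
    inX omega (Top c) /\ wnorm omega (Top c) <= M * wnorm omega c.

Definition eigvec (omega : nat -> R) (mu : C) (g : nat -> C) : Prop :=
  inX omega g /\ forall m, Top g m = (mu * g m)%C.

(* f is in span[ ker(T - mu) ; P mu ]: a finite linear combination
   sum_i a_i g_i with g_i in ker(T - mu_i), P mu_i. *)
Definition in_eigspan (omega : nat -> R) (P : C -> Prop) (f : nat -> C) : Prop :=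
  exists l : list (C * C * (nat -> C)),
    (forall t, In t l -> P (snd (fst t)) /\ eigvec omega (snd (fst t)) (snd t)) /\
    forall n, f n = fold_right (fun t acc => (fst (fst t) * snd t n + acc)%C) 0%C l.

Definition dense_in_X (omega : nat -> R) (S : (nat -> C) -> Prop) : Prop :=
  forall f, inX omega f -> forall eps : R, 0 < eps ->
    exists g, S g /\ wnorm omega (csub f g) < eps.

Definition godefroy_shapiro (omega : nat -> R) : Prop :=
  dense_in_X omega (in_eigspan omega (fun mu => Cmod mu < 1)) /\
  dense_in_X omega (in_eigspan omega (fun mu => Cmod mu > 1)).

Definition omega0 (n : nat) : R := (INR n + 1) / PI.

(* Main.v *)
Require Import Defs.
From Stdlib Require Import Reals Lra Lia Arith List FunctionalExtensionality Classical.
From Coquelicot Require Import Coquelicot.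
Open Scope R_scope.

Lemma collatz_even t : collatz (2 * t)%nat = t.
Proof.
  unfold collatz. rewrite Nat.even_even.
  rewrite Nat.mul_comm. apply Nat.div_mul. lia.
Qed.

Lemma collatz_odd t : collatz (2 * t + 1)%nat = (3 * t + 2)%nat.
Proof.
  unfold collatz. replace (2 * t + 1)%nat with (1 + 2 * t)%nat by lia.
  rewrite Nat.even_add_mul_2. change (Nat.even 1) with false. cbv iota.
  replace (3 * (1 + 2 * t) + 1)%nat with ((3 * t + 2) * 2)%nat by lia.
  apply Nat.div_mul. lia.
Qed.

Lemma collatz_char j m : collatz j = m <-> (j = 2 * m \/ (exists t, j = 2 * t + 1 /\ 3 * j + 1 = 2 * m))%nat.
Proof.
  destruct (Nat.Even_or_Odd j) as [[t Ht]|[t Ht]]; subst j.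
  - rewrite collatz_even. split; intro H.
    + left; lia.
    + destruct H as [H|[s [Hs _]]]; lia.
  - rewrite collatz_odd. split; intro H.
    + right. exists t. lia.
    + destruct H as [H|[s [Hs H]]]; lia.
Qed.

Lemma sum_zero (f : nat -> C) a b :
  (forall j, (a <= j <= b)%nat -> f j = zero) -> sum_n_m f a b = zero.
Proof.
  intros H. rewrite (sum_n_m_ext_loc f (fun _ => zero)) by auto.
  apply sum_n_m_const_zero.
Qed.

Lemma sum_single (v : C) a p b :
  (a <= p <= b)%nat ->
  sum_n_m (fun j => if (j =? p)%nat then v else zero) a b = v.
Proof.
  revert p. induction b; intros p Hp.
  - assert (a = 0 /\ p = 0)%nat as [-> ->] by lia. rewrite sum_n_n. reflexivity.
  - rewrite sum_n_Sm by lia.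
    destruct (Nat.eq_dec p (S b)) as [->|Hne].
    + rewrite sum_zero.
      * rewrite Nat.eqb_refl. apply plus_zero_l.
      * intros j Hj. destruct (j =? S b)%nat eqn:E; [apply Nat.eqb_eq in E; lia|reflexivity].
    + rewrite IHb by lia. destruct (S b =? p)%nat eqn:E; [apply Nat.eqb_eq in E; lia|].
      apply plus_zero_r.
Qed.

Lemma Top_eig (c : nat -> C) (mu : C) :
  (forall n, (n < 3)%nat -> c n = 0%C) ->
  (forall m j, (3 <= m)%nat -> (3 <= j)%nat -> (3 * j + 1 = 2 * m)%nat -> (c (2 * m)%nat + c j = mu * c m)%C) ->
  (forall m, (3 <= m)%nat -> (forall j, (3 <= j)%nat -> (3 * j + 1 <> 2 * m)%nat) -> (c (2 * m)%nat = mu * c m)%C) ->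
  forall m, Top c m = (mu * c m)%C.
Proof.
  intros H0 H1 H2 m. unfold Top.
  destruct (3 <=? m)%nat eqn:Em.
  2:{ apply Nat.leb_gt in Em. rewrite H0 by lia. ring. }
  apply Nat.leb_le in Em.
  destruct (classic (exists j, 3 <= j /\ 3 * j + 1 = 2 * m)%nat) as [[j [Hj1 Hj2]]|Hn].
  - rewrite <- (H1 m j) by auto.
    rewrite (sum_n_m_ext_loc _ (fun k => plus (if (k =? 2*m)%nat then c (2*m)%nat else zero)
                                        (if (k =? j)%nat then c j else zero))).
    + rewrite sum_n_m_plus. rewrite !sum_single by lia. reflexivity.
    + intros k Hk. destruct (collatz k =? m)%nat eqn:E.
      * apply Nat.eqb_eq, collatz_char in E.
        destruct E as [E|[t [Ht E]]].
        -- subst k. rewrite Nat.eqb_refl. destruct (2*m =? j)%nat eqn:E2; [apply Nat.eqb_eq in E2; lia|].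
           symmetry; apply plus_zero_r.
        -- assert (Hkj : k = j) by lia. rewrite Hkj. rewrite Nat.eqb_refl.
           destruct (j =? 2*m)%nat eqn:E2; [apply Nat.eqb_eq in E2; lia|]. symmetry; apply plus_zero_l.
      * assert (k <> 2 * m /\ k <> j)%nat as [Ha Hb].
        { apply Nat.eqb_neq in E. split; intro; subst k; apply E; apply collatz_char.
          - left; reflexivity.
          - right. destruct (Nat.Even_or_Odd j) as [[t Ht]|[t Ht]]; [lia|]. exists t. split; auto. }
        apply Nat.eqb_neq in Ha. apply Nat.eqb_neq in Hb. rewrite Ha, Hb. symmetry. apply plus_zero_l.
  - rewrite <- H2.
    + rewrite (sum_n_m_ext_loc _ (fun k => if (k =? 2*m)%nat then c (2*m)%nat else zero)).
      * apply sum_single. lia.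
      * intros k Hk. destruct (collatz k =? m)%nat eqn:E.
        -- apply Nat.eqb_eq, collatz_char in E.
           destruct E as [E|[t [Ht E]]].
           ++ subst k. rewrite Nat.eqb_refl. reflexivity.
           ++ exfalso. apply Hn. exists k. lia.
        -- destruct (k =? 2*m)%nat eqn:E2; [|reflexivity].
           apply Nat.eqb_eq in E2. subst k. apply Nat.eqb_neq in E. exfalso. apply E.
           apply collatz_char. left. reflexivity.
    + auto.
    + intros j Hj Hj2. apply Hn. exists j. lia.
Qed.

Definition vadd (a b : nat -> C) : nat -> C := fun n => (a n + b n)%C.
Definition vscal (z : C) (a : nat -> C) : nat -> C := fun n => (z * a n)%C.
Definition ej (j : nat) : nat -> C := fun n => if (n =? j)%nat then 1%C else 0%C.
Definition vzero : nat -> C := fun _ => 0%C.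
Definition nrm2 (omega : nat -> R) (c : nat -> C) : R := Series (wterm omega c).

Definition wpos (omega : nat -> R) := forall n, (1 <= n)%nat -> 0 < omega n.

Lemma wterm_nonneg omega c n : wpos omega -> 0 <= wterm omega c n.
Proof.
  intros Hp. unfold wterm. destruct (3 <=? n)%nat eqn:E; [|lra].
  apply Nat.leb_le in E. apply Rdiv_le_0_compat.
  - apply pow2_ge_0.
  - apply Hp. lia.
Qed.

Lemma sq_add_le (x y z : R) : 0 <= x -> 0 <= y -> z <= x + y -> 0 <= z -> z ^ 2 <= 2 * x ^ 2 + 2 * y ^ 2.
Proof. intros. assert (z*z <= (x+y)*(x+y)) by (apply Rmult_le_compat; lra). assert (0 <= (x-y)*(x-y)) by (apply Rle_0_sqr). simpl. lra. Qed.

Lemma wterm_add omega a b n : wpos omega ->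
  wterm omega (vadd a b) n <= 2 * wterm omega a n + 2 * wterm omega b n.
Proof.
  intros Hp. unfold wterm, vadd. destruct (3 <=? n)%nat eqn:E; [|lra].
  apply Nat.leb_le in E. assert (Hw : 0 < omega n) by (apply Hp; lia).
  unfold Rdiv. rewrite <- !Rmult_assoc, <- Rmult_plus_distr_r.
  apply Rmult_le_compat_r; [left; apply Rinv_0_lt_compat; auto|].
  apply sq_add_le; try apply Cmod_ge_0. apply Cmod_triangle.
Qed.

Lemma wterm_scal omega z a n :
  wterm omega (vscal z a) n = (Cmod z) ^ 2 * wterm omega a n.
Proof.
  unfold wterm, vscal. destruct (3 <=? n)%nat; [|ring].
  rewrite Cmod_mult. unfold Rdiv. ring.
Qed.

Lemma wterm_ext omega a b : (forall n, a n = b n) -> forall n, wterm omega a n = wterm omega b n.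
Proof. intros H n. unfold wterm. rewrite H. reflexivity. Qed.

Lemma csub_eq a b : forall n, csub a b n = vadd a (vscal (-1)%C b) n.
Proof. intros n. unfold csub, vadd, vscal. ring. Qed.


Lemma Series_const0 : Series (fun _ => 0) = 0.
Proof.
  rewrite (Series_ext _ (fun n => 0 * (fun _ => 1) n)); [rewrite Series_scal_l; ring | intros; simpl; ring].
Qed.

Lemma nrm2_nonneg omega c : wpos omega -> ex_series (wterm omega c) -> 0 <= nrm2 omega c.
Proof.
  intros Hp Hex. unfold nrm2.
  replace 0 with (Series (fun _ => 0)).
  - apply Series_le; auto. intros n; split; [lra|apply wterm_nonneg; auto].
  - apply Series_const0.
Qed.

Lemma exR_plus (a b : nat -> R) : ex_series a -> ex_series b -> ex_series (fun n => a n + b n).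
Proof. intros Ha Hb. exact (@ex_series_plus R_AbsRing R_NormedModule a b Ha Hb). Qed.

Lemma exR_scal (c : R) (a : nat -> R) : ex_series a -> ex_series (fun n => c * a n).
Proof. intros Ha. exact (@ex_series_scal_l R_AbsRing R_NormedModule c a Ha). Qed.

Lemma exR_le (a b : nat -> R) : (forall n, 0 <= a n <= b n) -> ex_series b -> ex_series a.
Proof.
  intros H Hb. apply (@ex_series_le R_AbsRing R_CompleteNormedModule a b); auto.
  intros n. change (norm (a n)) with (Rabs (a n)). rewrite Rabs_pos_eq; apply H.
Qed.

Lemma ex_series_dom (a b c : nat -> R) :
  (forall n, 0 <= a n) -> (forall n, a n <= 2 * b n + 2 * c n) ->
  ex_series b -> ex_series c -> ex_series a.
Proof.
  intros H0 H1 Hb Hc. apply (exR_le _ (fun n => 2 * b n + 2 * c n)).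
  - intros n; split; auto.
  - apply exR_plus; apply exR_scal; auto.
Qed.

Lemma Series_dom (a b c : nat -> R) :
  (forall n, 0 <= a n) -> (forall n, a n <= 2 * b n + 2 * c n) ->
  ex_series b -> ex_series c -> Series a <= 2 * Series b + 2 * Series c.
Proof.
  intros H0 H1 Hb Hc.
  rewrite <- !Series_scal_l. rewrite <- Series_plus.
  - apply Series_le; [intros n; split; auto|].
    apply exR_plus; apply exR_scal; auto.
  - apply exR_scal; auto.
  - apply exR_scal; auto.
Qed.

Lemma inX_ext omega a b : (forall n, a n = b n) -> inX omega a -> inX omega b.
Proof.
  intros H [H1 H2]. split.
  - intros n Hn. rewrite <- H. auto.
  - apply (ex_series_ext (wterm omega a)); auto. apply wterm_ext; auto.
Qed.

Lemma nrm2_ext omega a b : (forall n, a n = b n) -> nrm2 omega a = nrm2 omega b.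
Proof. intros H. unfold nrm2. apply Series_ext. apply wterm_ext. auto. Qed.

Lemma inX_add omega a b : wpos omega -> inX omega a -> inX omega b -> inX omega (vadd a b).
Proof.
  intros Hp [Ha1 Ha2] [Hb1 Hb2]. split.
  - intros n Hn. unfold vadd. rewrite Ha1, Hb1 by auto. ring.
  - apply (ex_series_dom _ (wterm omega a) (wterm omega b)); auto.
    + intros; apply wterm_nonneg; auto.
    + intros; apply wterm_add; auto.
Qed.


Lemma inX_scal omega z a : inX omega a -> inX omega (vscal z a).
Proof.
  intros [Ha1 Ha2]. split.
  - intros n Hn. unfold vscal. rewrite Ha1 by auto. ring.
  - apply (ex_series_ext (fun n => Cmod z ^ 2 * wterm omega a n)).
    + intros; rewrite wterm_scal; auto.
    + apply exR_scal; auto.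
Qed.

Lemma inX_csub omega a b : wpos omega -> inX omega a -> inX omega b -> inX omega (csub a b).
Proof.
  intros Hp Ha Hb. apply (inX_ext _ (vadd a (vscal (-1)%C b))).
  - intros n; symmetry; apply csub_eq.
  - apply inX_add; auto. apply inX_scal; auto.
Qed.

Lemma nrm2_add omega a b : wpos omega -> inX omega a -> inX omega b ->
  nrm2 omega (vadd a b) <= 2 * nrm2 omega a + 2 * nrm2 omega b.
Proof.
  intros Hp [Ha1 Ha2] [Hb1 Hb2]. unfold nrm2. apply Series_dom; auto.
  - intros; apply wterm_nonneg; auto.
  - intros; apply wterm_add; auto.
Qed.

Lemma nrm2_scal omega z a : nrm2 omega (vscal z a) = Cmod z ^ 2 * nrm2 omega a.
Proof.
  unfold nrm2. rewrite <- Series_scal_l. apply Series_ext. intros; apply wterm_scal.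
Qed.

Lemma Cmod_m1' : Cmod (-1)%C = 1.
Proof. rewrite Cmod_R. rewrite Rabs_left by lra. lra. Qed.

Lemma nrm2_csub omega a b : wpos omega -> inX omega a -> inX omega b ->
  nrm2 omega (csub a b) <= 2 * nrm2 omega a + 2 * nrm2 omega b.
Proof.
  intros Hp Ha Hb. rewrite (nrm2_ext _ _ (vadd a (vscal (-1)%C b))) by apply csub_eq.
  eapply Rle_trans; [apply nrm2_add; auto; apply inX_scal; auto|].
  rewrite nrm2_scal. rewrite Cmod_m1'. lra.
Qed.

Lemma nrm2_zero omega : nrm2 omega vzero = 0.
Proof.
  unfold nrm2. rewrite <- Series_const0. apply Series_ext.
  intros n. unfold wterm, vzero. destruct (3 <=? n)%nat; [rewrite Cmod_0|]; simpl; unfold Rdiv; ring.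
Qed.
Definition ffold (l : list (C * C * (nat -> C))) (n : nat) : C :=
  fold_right (fun t acc => (fst (fst t) * snd t n + acc)%C) 0%C l.

Lemma fold_shift (l : list (C * C * (nat -> C))) n acc :
  fold_right (fun t acc => (fst (fst t) * snd t n + acc)%C) acc l = (ffold l n + acc)%C.
Proof.
  induction l as [|t l IH]; simpl.
  - unfold ffold; simpl. ring.
  - rewrite IH. unfold ffold; simpl. ring.
Qed.

Lemma ffold_app l1 l2 n : ffold (l1 ++ l2) n = (ffold l1 n + ffold l2 n)%C.
Proof. unfold ffold. rewrite fold_right_app. apply fold_shift. Qed.

Definition scal_list (z : C) (l : list (C * C * (nat -> C))) :=
  map (fun t => ((z * fst (fst t))%C, snd (fst t), snd t)) l.

Lemma ffold_scal z l n : ffold (scal_list z l) n = (z * ffold l n)%C.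
Proof.
  induction l as [|t l IH]; unfold ffold in *; simpl.
  - ring.
  - rewrite IH. ring.
Qed.

Lemma span_add omega P f g : in_eigspan omega P f -> in_eigspan omega P g ->
  in_eigspan omega P (vadd f g).
Proof.
  intros [l1 [H1 E1]] [l2 [H2 E2]]. exists (l1 ++ l2). split.
  - intros t Ht. apply in_app_or in Ht. destruct Ht; auto.
  - intros n. fold (ffold (l1 ++ l2) n). rewrite ffold_app. unfold vadd.
    rewrite E1, E2. reflexivity.
Qed.

Lemma span_scal omega P z f : in_eigspan omega P f -> in_eigspan omega P (vscal z f).
Proof.
  intros [l [H1 E1]]. exists (scal_list z l). split.
  - intros t Ht. unfold scal_list in Ht. apply in_map_iff in Ht.
    destruct Ht as [t0 [<- Ht0]]. simpl. auto.
  - intros n. fold (ffold (scal_list z l) n). rewrite ffold_scal. unfold vscal.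
    rewrite E1. reflexivity.
Qed.

Lemma span_eig omega (P : C -> Prop) mu g : P mu -> eigvec omega mu g -> in_eigspan omega P g.
Proof.
  intros HP He. exists ((RtoC 1, mu, g) :: nil). split.
  - intros t [<-|[]]. simpl. auto.
  - intros n. simpl. ring.
Qed.

Lemma span_zero omega P : in_eigspan omega P vzero.
Proof. exists nil. split; [intros t []|]. intros n. reflexivity. Qed.

Lemma inX_zero omega : inX omega vzero.
Proof.
  split; [reflexivity|]. apply (ex_series_ext (fun n => 0 * (/2) ^ n)).
  - intros n. unfold wterm, vzero. destruct (3 <=? n)%nat; [rewrite Cmod_0|]; simpl; unfold Rdiv; ring.
  - apply exR_scal. apply ex_series_geom. rewrite Rabs_pos_eq; lra.
Qed.

Lemma span_inX omega P f : wpos omega -> in_eigspan omega P f -> inX omega f.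
Proof.
  intros Hp [l [H1 E1]]. revert f E1. induction l as [|t l IH]; intros f E1.
  - apply (inX_ext _ vzero); [|apply inX_zero]. intros n. rewrite E1. reflexivity.
  - apply (inX_ext _ (vadd (vscal (fst (fst t)) (snd t)) (ffold l))).
    + intros n. rewrite E1. reflexivity.
    + apply inX_add; auto.
      * apply inX_scal. destruct (H1 t) as [_ [He _]]; [left; auto|]. auto.
      * apply IH; [intros; apply H1; right; auto|]. intros; reflexivity.
Qed.

Definition Cl (omega : nat -> R) (P : C -> Prop) (h : nat -> C) : Prop := inX omega h /\
  forall eps, 0 < eps -> exists g, in_eigspan omega P g /\ nrm2 omega (csub h g) < eps.

Lemma Cl_ext omega P a b : (forall n, a n = b n) -> Cl omega P a -> Cl omega P b.
Proof.
  intros H Ha. replace b with a; auto. apply functional_extensionality; auto.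
Qed.

Lemma Cl_add omega P a b : wpos omega -> Cl omega P a -> Cl omega P b -> Cl omega P (vadd a b).
Proof.
  intros Hp [Ha1 Ha2] [Hb1 Hb2]. split; [apply inX_add; auto|].
  intros eps He.
  destruct (Ha2 (eps/4)) as [g1 [Hg1 N1]]; [lra|].
  destruct (Hb2 (eps/4)) as [g2 [Hg2 N2]]; [lra|].
  exists (vadd g1 g2). split; [apply span_add; auto|].
  assert (X1 := span_inX _ _ _ Hp Hg1). assert (X2 := span_inX _ _ _ Hp Hg2).
  rewrite (nrm2_ext _ _ (vadd (csub a g1) (csub b g2))).
  - eapply Rle_lt_trans; [apply nrm2_add; auto; apply inX_csub; auto|]. lra.
  - intros n. unfold csub, vadd. ring.
Qed.

Lemma Cl_scal omega P z a : wpos omega -> Cl omega P a -> Cl omega P (vscal z a).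
Proof.
  intros Hp [Ha1 Ha2]. split; [apply inX_scal; auto|].
  intros eps He.
  assert (Hz : 0 <= Cmod z ^ 2) by apply pow2_ge_0.
  destruct (Ha2 (eps / (Cmod z ^ 2 + 1))) as [g [Hg N]].
  { apply Rdiv_lt_0_compat; lra. }
  exists (vscal z g). split; [apply span_scal; auto|].
  rewrite (nrm2_ext _ _ (vscal z (csub a g))).
  - rewrite nrm2_scal.
    assert (X1 := span_inX _ _ _ Hp Hg).
    assert (0 <= nrm2 omega (csub a g)) by (apply nrm2_nonneg; auto; apply inX_csub; auto).
    apply (Rmult_lt_compat_l (Cmod z ^ 2 + 1)) in N; [|lra].
    unfold Rdiv in N. rewrite <- Rmult_assoc, (Rmult_comm _ eps), Rmult_assoc, Rinv_r in N by lra.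
    nra.
  - intros n. unfold csub, vscal. ring.
Qed.

Lemma Cl_lim omega P h : wpos omega -> inX omega h ->
  (forall eps, 0 < eps -> exists h', Cl omega P h' /\ nrm2 omega (csub h h') < eps) ->
  Cl omega P h.
Proof.
  intros Hp Hh H. split; auto. intros eps He.
  destruct (H (eps/4)) as [h' [[Hh'1 Hh'2] N1]]; [lra|].
  destruct (Hh'2 (eps/4)) as [g [Hg N2]]; [lra|].
  exists g. split; auto.
  assert (X1 := span_inX _ _ _ Hp Hg).
  rewrite (nrm2_ext _ _ (vadd (csub h h') (csub h' g))).
  - eapply Rle_lt_trans; [apply nrm2_add; auto; apply inX_csub; auto|]. lra.
  - intros n. unfold csub, vadd. ring.
Qed.

Lemma Cl_span omega P g : wpos omega -> in_eigspan omega P g -> Cl omega P g.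
Proof.
  intros Hp Hg. split; [eapply span_inX; eauto|]. intros eps He. exists g. split; auto.
  rewrite (nrm2_ext _ _ vzero), nrm2_zero; auto.
  intros n. unfold csub, vzero. ring.
Qed.

Lemma Cl_csub omega P a b : wpos omega -> Cl omega P a -> Cl omega P b -> Cl omega P (csub a b).
Proof.
  intros Hp Ha Hb. apply (Cl_ext _ _ (vadd a (vscal (-1)%C b))).
  - intros n; symmetry; apply csub_eq.
  - apply Cl_add; auto. apply Cl_scal; auto.
Qed.

Ltac Rfix := match goal with |- ?x = ?y => change (@eq R x y) end.

Lemma sumR_S (a : nat -> R) n : sum_n a (S n) = sum_n a n + a (S n).
Proof. exact (sum_Sn a n). Qed.

Lemma sumR_O (a : nat -> R) : sum_n a 0 = a 0%nat.
Proof. exact (sum_O a). Qed.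

Lemma sumR_le (a b : nat -> R) N : (forall n, a n <= b n) -> sum_n a N <= sum_n b N.
Proof.
  intros H. induction N; [rewrite !sumR_O; auto|]. rewrite !sumR_S. apply Rplus_le_compat; auto.
Qed.

Lemma sumR_le_loc (a b : nat -> R) N : (forall n, (n <= N)%nat -> a n <= b n) -> sum_n a N <= sum_n b N.
Proof.
  intros H. induction N; [rewrite !sumR_O; auto|]. rewrite !sumR_S. apply Rplus_le_compat; auto.
Qed.

Lemma sumR_plus (a b : nat -> R) N : sum_n (fun n => a n + b n) N = sum_n a N + sum_n b N.
Proof.
  induction N; [rewrite !sumR_O; reflexivity|].
  rewrite (sumR_S (fun n => a n + b n)), sumR_S, sumR_S, IHN. Rfix. ring.
Qed.

Lemma sumR_nonneg (a : nat -> R) N : (forall n, 0 <= a n) -> 0 <= sum_n a N.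
Proof. intros H. induction N; [rewrite sumR_O; auto|]. rewrite sumR_S. specialize (H (S N)). lra. Qed.

Lemma sumR_term (a : nat -> R) N n0 : (forall n, 0 <= a n) -> (n0 <= N)%nat -> a n0 <= sum_n a N.
Proof.
  intros H Hn. induction N.
  - assert (n0 = 0)%nat by lia. subst. rewrite sumR_O. lra.
  - rewrite sumR_S. destruct (Nat.eq_dec n0 (S N)) as [->|Hne].
    + assert (0 <= sum_n a N) by (apply sumR_nonneg; auto). lra.
    + specialize (IHN ltac:(lia)). specialize (H (S N)). lra.
Qed.

Lemma sumR_single (v : R) q M :
  sum_n (fun p => if (p =? q)%nat then v else 0) M = if (q <=? M)%nat then v else 0.
Proof.
  induction M.
  - rewrite sumR_O. destruct (0 =? q)%nat eqn:E1; destruct (q <=? 0)%nat eqn:E2; auto.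
    + apply Nat.eqb_eq in E1. apply Nat.leb_gt in E2. lia.
    + apply Nat.eqb_neq in E1. apply Nat.leb_le in E2. lia.
  - rewrite sumR_S, IHM.
    destruct (S M =? q)%nat eqn:E1.
    + apply Nat.eqb_eq in E1. subst q.
      replace (S M <=? M)%nat with false by (symmetry; apply Nat.leb_gt; lia).
      replace (S M <=? S M)%nat with true by (symmetry; apply Nat.leb_le; lia). Rfix; ring.
    + apply Nat.eqb_neq in E1.
      destruct (q <=? M)%nat eqn:E2.
      * apply Nat.leb_le in E2. replace (q <=? S M)%nat with true by (symmetry; apply Nat.leb_le; lia). Rfix; ring.
      * apply Nat.leb_gt in E2. replace (q <=? S M)%nat with false by (symmetry; apply Nat.leb_gt; lia). Rfix; ring.
Qed.

Lemma sumR_swap (f : nat -> nat -> R) P N :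
  sum_n (fun p => sum_n (fun n => f n p) N) P = sum_n (fun n => sum_n (fun p => f n p) P) N.
Proof.
  induction P.
  - rewrite sumR_O. apply sum_n_ext. intros n. rewrite sumR_O. reflexivity.
  - rewrite sumR_S, IHP. rewrite <- sumR_plus. apply sum_n_ext. intros n. rewrite sumR_S. reflexivity.
Qed.

Lemma is_series_R_lim (a : nat -> R) (l : R) : is_lim_seq (sum_n a) l -> is_series a l.
Proof. intros H. exact H. Qed.

Lemma is_series_R_lim' (a : nat -> R) (l : R) : is_series a l -> is_lim_seq (sum_n a) l.
Proof. intros H. exact H. Qed.

Lemma sum_le_Series (a : nat -> R) N : (forall n, 0 <= a n) -> ex_series a -> sum_n a N <= Series a.
Proof.
  intros H Hex. apply is_lim_seq_incr_compare.
  - apply is_series_R_lim'. apply Series_correct. auto.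
  - intros n. rewrite sumR_S. specialize (H (S n)). lra.
Qed.

Lemma series_bounded (b : nat -> R) (B : R) :
  (forall n, 0 <= b n) -> (forall N, sum_n b N <= B) -> ex_series b /\ Series b <= B.
Proof.
  intros H0 HB.
  assert (Hl : ex_finite_lim_seq (sum_n b)).
  { apply (ex_finite_lim_seq_incr _ B); auto. intros n. rewrite sumR_S. specialize (H0 (S n)). lra. }
  destruct Hl as [l Hl]. assert (Hs : is_series b l) by (apply is_series_R_lim; auto).
  split; [exists l; auto|].
  rewrite (is_series_unique _ _ Hs).
  assert (Rbar_le l B).
  { apply (is_lim_seq_le (sum_n b) (fun _ => B)); auto. apply is_lim_seq_const. }
  simpl in H. auto.
Qed.

Lemma sparse_series (x : nat -> nat) (b al : nat -> R) :
  (forall n, (n <= x n)%nat) -> (forall p, 0 <= b p) -> (forall n, 0 <= al n) ->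
  ex_series al -> (forall n, b (x n) <= al n) -> (forall p, (forall n, x n <> p) -> b p = 0) ->
  ex_series b /\ Series b <= Series al.
Proof.
  intros Hx Hb Ha Hex H1 H2. apply series_bounded; auto.
  intros M. apply Rle_trans with (sum_n al M); [|apply sum_le_Series; auto].
  apply Rle_trans with (sum_n (fun p => sum_n (fun n => if (x n =? p)%nat then al n else 0) M) M).
  - apply sumR_le_loc. intros p Hp.
    destruct (classic (exists n0, x n0 = p)) as [[n0 Hn0]|Hno].
    + apply Rle_trans with (al n0); [rewrite <- Hn0; auto|].
      assert (E : al n0 = (fun n => if (x n =? p)%nat then al n else 0) n0)
        by (simpl; rewrite Hn0, Nat.eqb_refl; reflexivity).
      rewrite E. apply (sumR_term (fun n => if (x n =? p)%nat then al n else 0) M n0).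
      * intros n. destruct (x n =? p)%nat; auto; lra.
      * specialize (Hx n0). lia.
    + rewrite H2; [apply sumR_nonneg; intros n; destruct (x n =? p)%nat; auto; lra|].
      intros n Hn. apply Hno. eauto.
  - rewrite sumR_swap. apply sumR_le. intros n.
    rewrite (sum_n_ext _ (fun p => if (p =? x n)%nat then al n else 0)).
    + rewrite sumR_single. destruct (x n <=? M)%nat; auto. lra.
    + intros p. rewrite Nat.eqb_sym. reflexivity.
Qed.
Lemma sum_stable (b : nat -> R) N : (forall n, (N < n)%nat -> b n = 0) ->
  forall k, sum_n b (N + k) = sum_n b N.
Proof.
  intros H k. induction k.
  - rewrite Nat.add_0_r. reflexivity.
  - replace (N + S k)%nat with (S (N + k)) by lia. rewrite sumR_S, IHk, H by lia. Rfix; ring.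
Qed.

Lemma is_series_fin (b : nat -> R) N : (forall n, (N < n)%nat -> b n = 0) -> is_series b (sum_n b N).
Proof.
  intros H. apply is_series_R_lim.
  apply (is_lim_seq_ext_loc (fun _ => sum_n b N)); [|apply is_lim_seq_const].
  exists N. intros n Hn. replace n with (N + (n - N))%nat by lia. symmetry. apply sum_stable; auto.
Qed.

Lemma exR_minus (a b : nat -> R) : ex_series a -> ex_series b -> ex_series (fun n => a n - b n).
Proof.
  intros Ha Hb. apply (ex_series_ext (fun n => a n + (-1) * b n)); [intros; Rfix; ring|].
  apply exR_plus; auto. apply exR_scal; auto.
Qed.

Definition tailR (L : nat) (a : nat -> R) : nat -> R := fun n => if (n <=? L)%nat then 0 else a n.

Lemma tail_spec (a : nat -> R) : (forall n, 0 <= a n) -> ex_series a ->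
  forall eps, 0 < eps -> exists L, forall L', (L <= L')%nat ->
    ex_series (tailR L' a) /\ Series (tailR L' a) < eps.
Proof.
  intros H0 Hex eps He.
  assert (Hl := is_series_R_lim' _ _ (Series_correct _ Hex)).
  apply is_lim_seq_spec in Hl. destruct (Hl (mkposreal eps He)) as [L HL].
  exists L. intros L' HL'.
  set (hd := fun n => if (n <=? L')%nat then a n else 0).
  assert (Hhd : is_series hd (sum_n a L')).
  { replace (sum_n a L') with (sum_n hd L').
    - apply is_series_fin. intros n Hn. unfold hd. replace (n <=? L')%nat with false; auto.
      symmetry; apply Nat.leb_gt; lia.
    - apply sum_n_ext_loc. intros n Hn. unfold hd. replace (n <=? L')%nat with true; auto.
      symmetry; apply Nat.leb_le; lia. }
  assert (E : forall n, tailR L' a n = a n - hd n).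
  { intros n. unfold tailR, hd. destruct (n <=? L')%nat; ring. }
  split.
  - apply (ex_series_ext (fun n => a n - hd n)); [intros; symmetry; auto|].
    apply exR_minus; auto. eexists; eauto.
  - rewrite (Series_ext _ (fun n => a n - hd n)) by auto.
    rewrite Series_minus; auto; [|eexists; eauto].
    rewrite (is_series_unique _ _ Hhd).
    specialize (HL L' HL'). simpl in HL. apply Rabs_def2 in HL. lra.
Qed.

Lemma tail_nonneg (a : nat -> R) L n : (forall n, 0 <= a n) -> 0 <= tailR L a n.
Proof. intros H. unfold tailR. destruct (n <=? L)%nat; auto; lra. Qed.
Fixpoint csum (f : nat -> C) (N : nat) : C :=
  match N with O => 0%C | S N => (csum f N + f N)%C end.

Lemma csum_zero (f : nat -> C) N : (forall n, (n < N)%nat -> f n = 0%C) -> csum f N = 0%C.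
Proof.
  induction N; intros H; simpl; auto. rewrite IHN, H by auto. ring.
Qed.

Lemma csum_single (f : nat -> C) N n0 : (n0 < N)%nat -> (forall n, (n < N)%nat -> n <> n0 -> f n = 0%C) -> csum f N = f n0.
Proof.
  induction N; intros Hn H; [lia|]. simpl.
  destruct (Nat.eq_dec n0 N) as [->|Hne].
  - rewrite csum_zero; [ring|]. intros n Hn'. apply H; lia.
  - rewrite IHN by (auto; lia). rewrite (H N) by lia. ring.
Qed.

Lemma csum_ext (f g : nat -> C) N : (forall n, f n = g n) -> csum f N = csum g N.
Proof. intros H. induction N; simpl; auto. rewrite IHN, H. reflexivity. Qed.

Lemma csum_minus (f g : nat -> C) N : csum (fun n => f n - g n)%C N = (csum f N - csum g N)%C.
Proof. induction N; simpl; [ring|]. rewrite IHN. ring. Qed.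

Lemma csum_scal (z : C) (f : nat -> C) N : csum (fun n => z * f n)%C N = (z * csum f N)%C.
Proof. induction N; simpl; [ring|]. rewrite IHN. ring. Qed.

Lemma lt_pow2 n : (n < 2 ^ n)%nat.
Proof. induction n; simpl; lia. Qed.

Lemma pow2_pos n : (1 <= 2 ^ n)%nat.
Proof. induction n; simpl; lia. Qed.

Lemma a2n_inj a n m : (1 <= a)%nat -> (a * 2 ^ n = a * 2 ^ m)%nat -> n = m.
Proof.
  intros Ha H. apply (Nat.pow_inj_r 2); [lia|]. apply (Nat.mul_cancel_l _ _ a); lia.
Qed.

Lemma a2n_ge a n : (1 <= a)%nat -> (n < a * 2 ^ n)%nat /\ (a <= a * 2 ^ n)%nat.
Proof. intros Ha. pose proof (lt_pow2 n). pose proof (pow2_pos n). split; nia. Qed.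

(* u_a(mu) = sum_n mu^n e_{a 2^n} *)
Definition U (a : nat) (mu : C) : nat -> C :=
  fun p => csum (fun n => if (p =? a * 2 ^ n)%nat then (mu ^ n)%C else 0%C) (S p).

Lemma U_at a mu n : (1 <= a)%nat -> U a mu (a * 2 ^ n)%nat = (mu ^ n)%C.
Proof.
  intros Ha. unfold U. destruct (a2n_ge a n Ha) as [H1 H2].
  etransitivity; [apply (csum_single (fun m => if (a * 2 ^ n =? a * 2 ^ m)%nat then (mu ^ m)%C else RtoC 0) _ n)|].
  - lia.
  - intros m Hm Hne. destruct (a * 2 ^ n =? a * 2 ^ m)%nat eqn:E; auto.
    apply Nat.eqb_eq, a2n_inj in E; auto; lia.
  - simpl. rewrite Nat.eqb_refl. reflexivity.
Qed.

Lemma U_off a mu p : (forall n, p <> (a * 2 ^ n)%nat) -> U a mu p = 0%C.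
Proof.
  intros H. unfold U. apply csum_zero. intros n _.
  destruct (p =? a * 2 ^ n)%nat eqn:E; auto. apply Nat.eqb_eq in E. exfalso; eapply H; eauto.
Qed.

Lemma U_small a mu p : (p < a)%nat -> U a mu p = 0%C.
Proof.
  intros Hp. apply U_off. intros n E. pose proof (pow2_pos n). nia.
Qed.

Lemma U_dbl a mu m : (1 <= a)%nat -> (2 * m <> a)%nat -> U a mu (2 * m)%nat = (mu * U a mu m)%C.
Proof.
  intros Ha Hm. destruct (classic (exists n, m = a * 2 ^ n)%nat) as [[n ->]|Hno].
  - replace (2 * (a * 2 ^ n))%nat with (a * 2 ^ S n)%nat by (simpl; lia).
    rewrite !U_at by auto. reflexivity.
  - rewrite !U_off; [ring| |].
    + intros n E. apply Hno. eauto.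
    + intros [|n] E; simpl in E; [lia|]. apply Hno. exists n. lia.
Qed.

Lemma U_odd a mu t : (1 <= a)%nat -> (2 * t + 1 <> a)%nat -> U a mu (2 * t + 1)%nat = 0%C.
Proof.
  intros Ha Hne. apply U_off. intros [|n] E; simpl in E; lia.
Qed.

Definition G (k : nat) (mu : C) : nat -> C := fun p => (U k mu p - U (3 * k + 1) mu p)%C.

Lemma odd_of_3j1 j m : (3 * j + 1 = 2 * m)%nat -> exists t, j = (2 * t + 1)%nat.
Proof. intros E. destruct (Nat.Even_or_Odd j) as [[t Ht]|[t Ht]]; [lia|]. eauto. Qed.

Lemma U_base a mu : (1 <= a)%nat -> U a mu a = 1%C.
Proof. intros Ha. pose proof (U_at a mu 0 Ha) as H. rewrite Nat.pow_0_r, Nat.mul_1_r in H. rewrite H. reflexivity. Qed.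

Lemma G_eig k mu : (3 <= k)%nat -> Nat.odd k = true -> forall m, Top (G k mu) m = (mu * G k mu m)%C.
Proof.
  intros Hk Hodd. apply Nat.odd_spec in Hodd. destruct Hodd as [s Hs].
  apply Top_eig.
  - intros n Hn. unfold G. rewrite !U_small by lia. ring.
  - intros m j Hm Hj E. unfold G.
    destruct (Nat.eq_dec j k) as [->|Hne].
    + rewrite (U_dbl k) by lia. rewrite <- E. rewrite (U_base (3 * k + 1)) by lia. rewrite (U_base k) by lia.
      rewrite (U_small (3 * k + 1) mu k) by lia. rewrite (U_small (3 * k + 1) mu m) by lia. ring.
    + rewrite (U_dbl k) by lia. rewrite (U_dbl (3 * k + 1)) by lia.
      assert (exists t, j = 2 * t + 1)%nat as [t ->] by (eapply odd_of_3j1; eauto).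
      rewrite (U_odd k) by lia. rewrite (U_odd (3 * k + 1)) by lia. ring.
  - intros m Hm Hno. unfold G.
    rewrite (U_dbl k) by lia. rewrite (U_dbl (3 * k + 1)).
    + ring.
    + lia.
    + intros E. apply (Hno k); lia.
Qed.

Lemma U4_eig mu : forall m, Top (U 4 mu) m = (mu * U 4 mu m)%C.
Proof.
  apply Top_eig.
  - intros n Hn. rewrite U_small by lia. reflexivity.
  - intros m j Hm Hj E. rewrite U_dbl by lia.
    assert (exists t, j = 2 * t + 1)%nat as [t ->] by (eapply odd_of_3j1; eauto).
    rewrite U_odd by lia. ring.
  - intros m Hm _. apply U_dbl; lia.
Qed.
Definition beta (omega : nat -> R) (mu0 : R) (a : nat) : nat -> R :=
  fun n => (mu0 ^ n) ^ 2 / omega (a * 2 ^ n)%nat.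

Lemma beta_nonneg omega mu0 a n : wpos omega -> (1 <= a)%nat -> 0 <= beta omega mu0 a n.
Proof.
  intros Hp Ha. unfold beta. apply Rdiv_le_0_compat; [apply pow2_ge_0|].
  apply Hp. pose proof (pow2_pos n). nia.
Qed.

Lemma U_inX omega a mu mu0 : wpos omega -> (3 <= a)%nat -> Cmod mu = mu0 ->
  ex_series (beta omega mu0 a) -> inX omega (U a mu).
Proof.
  intros Hp Ha Hmu Hb. split.
  - intros n Hn. apply U_small. lia.
  - apply (sparse_series (fun n => a * 2 ^ n)%nat _ (beta omega mu0 a)); auto.
    + intros n. destruct (a2n_ge a n) as [H1 _]; lia.
    + intros p. apply wterm_nonneg; auto.
    + intros n. apply beta_nonneg; auto; lia.
    + intros n. unfold wterm, beta. destruct (a2n_ge a n) as [_ H2]; [lia|].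
      replace (3 <=? a * 2 ^ n)%nat with true by (symmetry; apply Nat.leb_le; lia).
      rewrite U_at by lia. rewrite Cmod_pow, Hmu. lra.
    + intros p Hp'. unfold wterm. rewrite U_off; [|intros n E; apply (Hp' n); auto].
      rewrite Cmod_0. destruct (3 <=? p)%nat; simpl; unfold Rdiv; ring.
Qed.

Lemma G_eigvec omega k mu mu0 : wpos omega -> (3 <= k)%nat -> Nat.odd k = true -> Cmod mu = mu0 ->
  ex_series (beta omega mu0 k) -> ex_series (beta omega mu0 (3 * k + 1)) -> eigvec omega mu (G k mu).
Proof.
  intros Hp Hk Ho Hmu H1 H2. split.
  - apply (inX_ext _ (csub (U k mu) (U (3 * k + 1) mu))); [intros; reflexivity|].
    apply inX_csub; auto; eapply U_inX; eauto; lia.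
  - apply G_eig; auto.
Qed.

Lemma U4_eigvec omega mu mu0 : wpos omega -> Cmod mu = mu0 ->
  ex_series (beta omega mu0 4) -> eigvec omega mu (U 4 mu).
Proof.
  intros Hp Hmu H. split; [eapply U_inX; eauto|]. apply U4_eig.
Qed.

Definition zeta (q : nat) : C := (cos (2 * PI / INR q), sin (2 * PI / INR q)).

Lemma zeta_pow q N : (zeta q ^ N)%C = (cos (2 * PI / INR q * INR N), sin (2 * PI / INR q * INR N)).
Proof.
  induction N.
  - simpl. rewrite Rmult_0_r, cos_0, sin_0. reflexivity.
  - rewrite Cpow_S, IHN. rewrite S_INR. rewrite Rmult_plus_distr_l, Rmult_1_r.
    rewrite (Rplus_comm _ (2 * PI / INR q)).
    rewrite cos_plus, sin_plus. unfold zeta, Cmult. cbn [fst snd]. f_equal; ring.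
Qed.

Lemma Cmod_zeta q : Cmod (zeta q) = 1.
Proof.
  unfold zeta, Cmod. cbn [fst snd].
  replace (cos (2 * PI / INR q) ^ 2 + sin (2 * PI / INR q) ^ 2) with 1; [apply sqrt_1|].
  rewrite <- (sin2_cos2 (2 * PI / INR q)). unfold Rsqr. ring.
Qed.

Lemma zeta_pow_mult q j : (1 <= q)%nat -> (zeta q ^ (q * j))%C = 1%C.
Proof.
  intros Hq. rewrite zeta_pow. rewrite mult_INR.
  assert (INR q <> 0) by (apply not_0_INR; lia).
  replace (2 * PI / INR q * (INR q * INR j)) with (0 + 2 * INR j * PI) by (field; auto).
  rewrite cos_period, sin_period, cos_0, sin_0. reflexivity.
Qed.

Lemma trig_ne1 x : 0 < x < 2 * PI -> ((cos x, sin x) : C) <> RtoC 1.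
Proof.
  intros [H1 H2] E. injection E as Ec Es.
  destruct (Rlt_or_le x PI) as [Hx|Hx].
  - pose proof (sin_gt_0 x H1 Hx). lra.
  - destruct (Req_dec x PI) as [->|Hne].
    + rewrite cos_PI in Ec. lra.
    + pose proof (sin_gt_0 (x - PI)) as Hs. replace x with ((x - PI) + PI) in Es by ring.
      rewrite neg_sin in Es. assert (0 < sin (x - PI)) by (apply Hs; lra). lra.
Qed.

Lemma zeta_ne1 q r : (0 < r < q)%nat -> (zeta q ^ r)%C <> 1%C.
Proof.
  intros Hr. rewrite zeta_pow. apply trig_ne1.
  assert (0 < INR r < INR q) by (split; [apply (lt_INR 0) | apply lt_INR]; lia).
  pose proof PI_RGT_0. split.
  - apply Rmult_lt_0_compat; [|lra]. apply Rdiv_lt_0_compat; lra.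
  - apply (Rmult_lt_reg_r (/ (2 * PI))); [apply Rinv_0_lt_compat; lra|].
    replace (2 * PI / INR q * INR r * / (2 * PI)) with (INR r / INR q) by (field; lra).
    rewrite Rinv_r by lra. apply (Rmult_lt_reg_r (INR q)); [lra|].
    unfold Rdiv. rewrite Rmult_assoc, Rinv_l by lra. lra.
Qed.

Lemma geom_csum (z : C) q : ((z - 1) * csum (fun t => z ^ t) q = z ^ q - 1)%C.
Proof. induction q; simpl; [ring|]. rewrite Cmult_plus_distr_l, IHq. ring. Qed.

Lemma csum_one q : csum (fun t => (RtoC 1) ^ t)%C q = RtoC (INR q).
Proof.
  induction q; simpl csum; [reflexivity|]. rewrite IHq, Cpow_1_l, S_INR.
  unfold RtoC, Cplus. simpl. f_equal; ring.
Qed.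

Lemma root_filter q N : (1 <= q)%nat ->
  csum (fun t => (zeta q ^ N) ^ t)%C q = if (N mod q =? 0)%nat then RtoC (INR q) else 0%C.
Proof.
  intros Hq.
  assert (HN : (zeta q ^ N = zeta q ^ (N mod q))%C).
  { rewrite (Nat.div_mod_eq N q) at 1. rewrite Cpow_add_r, zeta_pow_mult by auto. ring. }
  rewrite HN. destruct (N mod q =? 0)%nat eqn:E.
  - apply Nat.eqb_eq in E. rewrite E. simpl Cpow. apply csum_one.
  - apply Nat.eqb_neq in E.
    assert (Hr : (N mod q < q)%nat) by (apply Nat.mod_upper_bound; lia).
    set (z := (zeta q ^ (N mod q))%C).
    assert (Hz1 : z <> 1%C) by (apply zeta_ne1; lia).
    assert (Hzq : (z ^ q = 1)%C).
    { unfold z. rewrite <- Cpow_mult_r, Nat.mul_comm. apply zeta_pow_mult; auto. }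
    pose proof (geom_csum z q) as Hg. rewrite Hzq in Hg.
    assert (Hz : (z - 1 <> 0)%C) by (intro H; apply Hz1; rewrite <- (Cplus_0_l 1); rewrite <- H; ring).
    transitivity (/ (z - 1) * ((z - 1) * csum (fun t => z ^ t)%C q))%C.
    + field. auto.
    + rewrite Hg. ring.
Qed.
Definition mut (Q t : nat) (mu0 : R) : C := (zeta (S Q) ^ t * RtoC mu0)%C.
Definition ct (Q m t : nat) (mu0 : R) : C :=
  ((zeta (S Q) ^ (S Q - m)) ^ t / (RtoC (INR (S Q)) * RtoC mu0 ^ m))%C.
Definition Fv (V : C -> nat -> C) (Q m : nat) (mu0 : R) : nat -> C :=
  fun p => csum (fun t => ct Q m t mu0 * V (mut Q t mu0) p)%C (S Q).

Lemma RtoC_neq0 x : x <> 0 -> RtoC x <> 0%C.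
Proof. intros H E. apply H. apply (RtoC_inj x 0). exact E. Qed.

Lemma Cmod_mut Q t mu0 : 0 < mu0 -> Cmod (mut Q t mu0) = mu0.
Proof.
  intros H. unfold mut. rewrite Cmod_mult, Cmod_pow, Cmod_zeta, pow1, Cmod_R, Rabs_pos_eq; lra.
Qed.

Lemma term_eq Q m t n mu0 : mu0 <> 0 ->
  (ct Q m t mu0 * (mut Q t mu0) ^ n =
   (RtoC mu0 ^ n / (RtoC (INR (S Q)) * RtoC mu0 ^ m)) * (zeta (S Q) ^ (S Q - m + n)) ^ t)%C.
Proof.
  intros Hm. unfold ct, mut. rewrite Cpow_mult_l.
  set (z := zeta (S Q)). set (d := (S Q - m)%nat).
  rewrite <- !Cpow_mult_r.
  replace ((d + n) * t)%nat with (d * t + t * n)%nat by ring.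
  rewrite Cpow_add_r.
  assert (H1 : RtoC (INR (S Q)) <> 0%C) by (apply RtoC_neq0; apply not_0_INR; lia).
  assert (H2 : (RtoC mu0 ^ m)%C <> 0%C) by (apply Cpow_nz; apply RtoC_neq0; auto).
  field. split; auto.
Qed.

Lemma Fv_coord a Q m n mu0 : (1 <= a)%nat -> mu0 <> 0 ->
  Fv (U a) Q m mu0 (a * 2 ^ n)%nat =
  if ((S Q - m + n) mod (S Q) =? 0)%nat then (RtoC mu0 ^ n / RtoC mu0 ^ m)%C else 0%C.
Proof.
  intros Ha Hm. unfold Fv.
  rewrite (csum_ext _ (fun t => (RtoC mu0 ^ n / (RtoC (INR (S Q)) * RtoC mu0 ^ m)) * (zeta (S Q) ^ (S Q - m + n)) ^ t)%C).
  - rewrite csum_scal, root_filter by lia.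
    assert (H1 : RtoC (INR (S Q)) <> 0%C) by (apply RtoC_neq0; apply not_0_INR; lia).
    assert (H2 : (RtoC mu0 ^ m)%C <> 0%C) by (apply Cpow_nz; apply RtoC_neq0; auto).
    destruct (_ =? 0)%nat.
    + field. split; auto.
    + ring.
  - intros t. rewrite U_at by auto. apply term_eq; auto.
Qed.

Lemma Fv_off a Q m mu0 p : (forall n, p <> (a * 2 ^ n)%nat) -> Fv (U a) Q m mu0 p = 0%C.
Proof.
  intros H. unfold Fv. apply csum_zero. intros t _. rewrite U_off by auto. ring.
Qed.

Lemma modq m Q n : (m <= Q)%nat -> (n <= m + Q)%nat ->
  ((S Q - m + n) mod (S Q) =? 0)%nat = (n =? m)%nat.
Proof.
  intros H1 H2.
  destruct (lt_eq_lt_dec n m) as [[Hlt| ->]|Hgt].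
  - rewrite Nat.mod_small by lia.
    replace (n =? m)%nat with false by (symmetry; apply Nat.eqb_neq; lia).
    apply Nat.eqb_neq; lia.
  - replace (S Q - m + m)%nat with (S Q) by lia. rewrite Nat.Div0.mod_same, !Nat.eqb_refl. reflexivity.
  - replace (S Q - m + n)%nat with ((n - m) + 1 * S Q)%nat by lia.
    rewrite Nat.Div0.mod_add, Nat.mod_small by lia.
    replace (n =? m)%nat with false by (symmetry; apply Nat.eqb_neq; lia).
    apply Nat.eqb_neq; lia.
Qed.

Lemma tail_ex (a : nat -> R) L : (forall n, 0 <= a n) -> ex_series a -> ex_series (tailR L a).
Proof.
  intros H Hex. apply (exR_le _ a); auto. intros n. unfold tailR.
  destruct (n <=? L)%nat; split; auto; lra.
Qed.

Lemma ej_coord a m n : (1 <= a)%nat -> ej (a * 2 ^ m) (a * 2 ^ n) = if (n =? m)%nat then 1%C else 0%C.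
Proof.
  intros Ha. unfold ej. destruct (n =? m)%nat eqn:E.
  - apply Nat.eqb_eq in E. subst. rewrite Nat.eqb_refl. reflexivity.
  - apply Nat.eqb_neq in E. replace (a * 2 ^ n =? a * 2 ^ m)%nat with false; auto.
    symmetry. apply Nat.eqb_neq. intro H. apply E. eapply a2n_inj; eauto.
Qed.

Lemma err_bound omega a m Q mu0 : wpos omega -> (3 <= a)%nat -> 0 < mu0 -> (m <= Q)%nat ->
  ex_series (beta omega mu0 a) ->
  ex_series (wterm omega (csub (ej (a * 2 ^ m)) (Fv (U a) Q m mu0))) /\
  nrm2 omega (csub (ej (a * 2 ^ m)) (Fv (U a) Q m mu0)) <=
    / (mu0 ^ m) ^ 2 * Series (tailR (m + Q) (beta omega mu0 a)).
Proof.
  intros Hp Ha Hmu HmQ Hb.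
  assert (Hbn : forall n, 0 <= beta omega mu0 a n) by (intros; apply beta_nonneg; auto; lia).
  assert (Hpm : 0 < mu0 ^ m) by (apply pow_lt; auto).
  assert (Hpm2 : 0 < / (mu0 ^ m) ^ 2) by (apply Rinv_0_lt_compat; apply pow_lt; auto).
  unfold nrm2. rewrite <- Series_scal_l.
  apply (sparse_series (fun n => a * 2 ^ n)%nat _ (fun n => / (mu0 ^ m) ^ 2 * tailR (m + Q) (beta omega mu0 a) n)).
  - intros n. destruct (a2n_ge a n) as [H1 _]; lia.
  - intros p. apply wterm_nonneg; auto.
  - intros n. apply Rmult_le_pos; [lra|]. apply tail_nonneg; auto.
  - apply exR_scal. apply tail_ex; auto.
  - intros n. destruct (a2n_ge a n) as [_ H2]; [lia|].
    unfold wterm. replace (3 <=? a * 2 ^ n)%nat with true by (symmetry; apply Nat.leb_le; lia).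
    unfold csub. rewrite ej_coord by lia. rewrite Fv_coord by (lia || lra).
    unfold tailR. destruct (n <=? m + Q)%nat eqn:En.
    + apply Nat.leb_le in En. rewrite modq by auto.
      destruct (n =? m)%nat eqn:Enm.
      * apply Nat.eqb_eq in Enm. subst n.
        replace (1 - RtoC mu0 ^ m / RtoC mu0 ^ m)%C with (RtoC 0).
        -- rewrite Cmod_0. unfold Rdiv. rewrite pow_i by lia. lra.
        -- field. apply Cpow_nz, RtoC_neq0; lra.
      * replace (0 - 0)%C with (RtoC 0) by ring. rewrite Cmod_0. unfold Rdiv. rewrite pow_i by lia. lra.
    + apply Nat.leb_gt in En.
      replace (n =? m)%nat with false by (symmetry; apply Nat.eqb_neq; lia).
      assert (Hw : 0 < omega (a * 2 ^ n)%nat) by (apply Hp; lia).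
      unfold beta. destruct (_ =? 0)%nat.
      * replace (0 - RtoC mu0 ^ n / RtoC mu0 ^ m)%C with (- (RtoC mu0 ^ n / RtoC mu0 ^ m))%C by ring.
        rewrite Cmod_opp, Cmod_div by (apply Cpow_nz, RtoC_neq0; lra).
        rewrite !Cmod_pow, Cmod_R, Rabs_pos_eq by lra.
        apply Req_le. field. split; lra.
      * replace (0 - 0)%C with (RtoC 0) by ring. rewrite Cmod_0. unfold Rdiv. rewrite pow_i by lia.
        rewrite Rmult_0_l. apply Rmult_le_pos; [lra|]. apply Rmult_le_pos; [apply pow2_ge_0|].
        left; apply Rinv_0_lt_compat; auto.
  - intros p Hp'. unfold wterm. unfold csub. rewrite Fv_off by auto.
    unfold ej. replace (p =? a * 2 ^ m)%nat with false by (symmetry; apply Nat.eqb_neq; auto).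
    replace (0 - 0)%C with (RtoC 0) by ring. rewrite Cmod_0.
    destruct (3 <=? p)%nat; simpl; unfold Rdiv; ring.
Qed.
Lemma span_ext omega P f g : (forall n, f n = g n) -> in_eigspan omega P f -> in_eigspan omega P g.
Proof.
  intros H [l [H1 E1]]. exists l. split; auto. intros n. rewrite <- H. auto.
Qed.

Lemma span_csum omega P (h : nat -> nat -> C) N :
  (forall t, (t < N)%nat -> in_eigspan omega P (h t)) ->
  in_eigspan omega P (fun p => csum (fun t => h t p) N).
Proof.
  induction N; intros H.
  - apply (span_ext _ _ vzero); [intros; reflexivity|]. apply span_zero.
  - apply (span_ext _ _ (vadd (fun p => csum (fun t => h t p) N) (h N))); [intros; reflexivity|].
    apply span_add; auto.
Qed.

Lemma wterm_ej omega j n : (3 <= j)%nat -> wterm omega (ej j) n = if (n =? j)%nat then / omega j else 0.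
Proof.
  intros Hj. unfold wterm, ej. destruct (n =? j)%nat eqn:E.
  - apply Nat.eqb_eq in E. subst. replace (3 <=? j)%nat with true by (symmetry; apply Nat.leb_le; lia).
    rewrite Cmod_1. unfold Rdiv. ring.
  - destruct (3 <=? n)%nat; [rewrite Cmod_0|]; simpl; unfold Rdiv; ring.
Qed.

Lemma ej_series omega j : (3 <= j)%nat -> is_series (wterm omega (ej j)) (/ omega j).
Proof.
  intros Hj.
  assert (E : / omega j = sum_n (wterm omega (ej j)) j).
  { rewrite (sum_n_ext _ (fun n => if (n =? j)%nat then / omega j else 0)) by (intros; apply wterm_ej; auto).
    rewrite sumR_single. rewrite Nat.leb_refl. reflexivity. }
  rewrite E. apply is_series_fin. intros n Hn. rewrite wterm_ej by auto.
  replace (n =? j)%nat with false; auto. symmetry; apply Nat.eqb_neq; lia.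
Qed.

Lemma ej_inX omega j : (3 <= j)%nat -> inX omega (ej j).
Proof.
  intros Hj. split.
  - intros n Hn. unfold ej. replace (n =? j)%nat with false; auto. symmetry; apply Nat.eqb_neq; lia.
  - eexists. apply ej_series; auto.
Qed.

Lemma nrm2_ej omega j : (3 <= j)%nat -> nrm2 omega (ej j) = / omega j.
Proof. intros Hj. unfold nrm2. apply is_series_unique. apply ej_series; auto. Qed.

Lemma E_inX omega a m Q mu0 : wpos omega -> (3 <= a)%nat -> 0 < mu0 -> (m <= Q)%nat ->
  ex_series (beta omega mu0 a) -> inX omega (csub (ej (a * 2 ^ m)) (Fv (U a) Q m mu0)).
Proof.
  intros Hp Ha Hm HQ Hb. split.
  - intros n Hn. unfold csub, ej, Fv.
    destruct (a2n_ge a m) as [_ H2]; [lia|].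
    replace (n =? a * 2 ^ m)%nat with false by (symmetry; apply Nat.eqb_neq; lia).
    rewrite csum_zero; [ring|]. intros t _. rewrite U_small by lia. ring.
  - apply (err_bound omega a m Q mu0); auto.
Qed.

Definition Pgood (P : C -> Prop) (mu0 : R) := forall mu, Cmod mu = mu0 -> P mu.

Lemma Cl_pow4 omega P mu0 m : wpos omega -> 0 < mu0 -> ex_series (beta omega mu0 4) ->
  Pgood P mu0 -> Cl omega P (ej (4 * 2 ^ m)).
Proof.
  intros Hp Hm Hb HP. split.
  - apply ej_inX. pose proof (pow2_pos m). lia.
  - intros eps He.
    assert (Hpm : 0 < (mu0 ^ m) ^ 2) by (apply pow_lt, pow_lt; auto).
    destruct (tail_spec (beta omega mu0 4)) with (eps := eps * (mu0 ^ m) ^ 2) as [L HL]; auto.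
    + intros; apply beta_nonneg; auto; lia.
    + apply Rmult_lt_0_compat; auto.
    + set (Q := Nat.max m L).
      exists (Fv (U 4) Q m mu0). split.
      * apply span_csum. intros t _. apply span_scal. apply (span_eig _ _ (mut Q t mu0)).
        -- apply HP. apply Cmod_mut; auto.
        -- apply (U4_eigvec _ _ mu0); auto. apply Cmod_mut; auto.
      * assert (HQ : (m <= Q)%nat) by (unfold Q; lia).
        destruct (err_bound omega 4 m Q mu0 Hp ltac:(lia) Hm HQ Hb) as [_ Hn].
        eapply Rle_lt_trans; [apply Hn|].
        destruct (HL (m + Q)%nat) as [_ Ht]; [unfold Q; lia|].
        apply (Rmult_lt_compat_l (/ (mu0 ^ m) ^ 2)) in Ht; [|apply Rinv_0_lt_compat; auto].
        replace (/ (mu0 ^ m) ^ 2 * (eps * (mu0 ^ m) ^ 2)) with eps in Ht by (field; apply pow_nonzero; lra). auto.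
Qed.

Lemma Fv_G k Q m mu0 p : Fv (G k) Q m mu0 p = (Fv (U k) Q m mu0 p - Fv (U (3 * k + 1)) Q m mu0 p)%C.
Proof.
  unfold Fv. rewrite <- csum_minus. apply csum_ext. intros t. unfold G. ring.
Qed.

Lemma Cl_pair omega P mu0 k m : wpos omega -> 0 < mu0 -> (3 <= k)%nat -> Nat.odd k = true ->
  ex_series (beta omega mu0 k) -> ex_series (beta omega mu0 (3 * k + 1)) ->
  Pgood P mu0 -> Cl omega P (csub (ej (k * 2 ^ m)) (ej ((3 * k + 1) * 2 ^ m))).
Proof.
  intros Hp Hm Hk Ho Hb1 Hb2 HP. pose proof (pow2_pos m). split.
  - apply inX_csub; auto; apply ej_inX; nia.
  - intros eps He.
    assert (Hpm : 0 < (mu0 ^ m) ^ 2) by (apply pow_lt, pow_lt; auto).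
    destruct (tail_spec (beta omega mu0 k)) with (eps := eps * (mu0 ^ m) ^ 2 / 8) as [L1 HL1]; auto.
    { intros; apply beta_nonneg; auto; lia. }
    { apply Rdiv_lt_0_compat; [apply Rmult_lt_0_compat|]; lra. }
    destruct (tail_spec (beta omega mu0 (3 * k + 1))) with (eps := eps * (mu0 ^ m) ^ 2 / 8) as [L2 HL2]; auto.
    { intros; apply beta_nonneg; auto; lia. }
    { apply Rdiv_lt_0_compat; [apply Rmult_lt_0_compat|]; lra. }
    set (Q := Nat.max m (Nat.max L1 L2)).
    exists (Fv (G k) Q m mu0). split.
    + apply span_csum. intros t _. apply span_scal. apply (span_eig _ _ (mut Q t mu0)).
      * apply HP. apply Cmod_mut; auto.
      * apply (G_eigvec _ _ _ mu0); auto. apply Cmod_mut; auto.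
    + rewrite (nrm2_ext _ _ (csub (csub (ej (k * 2 ^ m)) (Fv (U k) Q m mu0))
                                  (csub (ej ((3 * k + 1) * 2 ^ m)) (Fv (U (3 * k + 1)) Q m mu0)))).
      2:{ intros n. unfold csub. rewrite Fv_G. ring. }
      assert (HQ : (m <= Q)%nat) by (unfold Q; lia).
      eapply Rle_lt_trans; [apply nrm2_csub; auto; apply E_inX; auto; lia|].
      destruct (err_bound omega k m Q mu0 Hp ltac:(lia) Hm HQ Hb1) as [_ N1].
      destruct (err_bound omega (3 * k + 1) m Q mu0 Hp ltac:(lia) Hm HQ Hb2) as [_ N2].
      destruct (HL1 (m + Q)%nat) as [_ T1]; [unfold Q; lia|].
      destruct (HL2 (m + Q)%nat) as [_ T2]; [unfold Q; lia|].
      assert (Hi : 0 < / (mu0 ^ m) ^ 2) by (apply Rinv_0_lt_compat; auto).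
      apply (Rmult_lt_compat_l (/ (mu0 ^ m) ^ 2)) in T1; auto.
      apply (Rmult_lt_compat_l (/ (mu0 ^ m) ^ 2)) in T2; auto.
      replace (/ (mu0 ^ m) ^ 2 * (eps * (mu0 ^ m) ^ 2 / 8)) with (eps / 8) in T1, T2 by (field; apply pow_nonzero; lra).
      lra.
Qed.
Lemma oddpart a : (1 <= a)%nat -> exists k n, Nat.odd k = true /\ a = (k * 2 ^ n)%nat.
Proof.
  induction a as [a IH] using lt_wf_ind. intros Ha.
  destruct (Nat.Even_or_Odd a) as [[b Hb]|[b Hb]].
  - destruct (IH b) as [k [n [Hk E]]]; try lia.
    exists k, (S n). split; auto. simpl. lia.
  - exists a, 0%nat. split; [apply Nat.odd_spec; exists b; auto|]. simpl. lia.
Qed.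

Definition Hyp (omega : nat -> R) (mu0 : R) (P : C -> Prop) (delta : R) :=
  wpos omega /\ 0 < delta /\ (forall n, (1 <= n)%nat -> delta <= omega n) /\ 0 < mu0 /\
  (forall a, (3 <= a)%nat -> ex_series (beta omega mu0 a)) /\ Pgood P mu0.

Lemma step omega mu0 P delta a : Hyp omega mu0 P delta -> (3 <= a)%nat ->
  exists b, (a < b)%nat /\ Cl omega P (csub (ej a) (ej b)).
Proof.
  intros (Hp & Hd & Hdl & Hm & Hb & HP) Ha.
  destruct (oddpart a) as [k [n [Hk E]]]; [lia|].
  pose proof (pow2_pos n).
  destruct (Nat.eq_dec k 1) as [->|Hk1].
  - destruct n as [|[|n]]; [simpl in E; lia|simpl in E; lia|].
    exists (4 * 2 ^ S n)%nat. split; [simpl in E |- *; lia|].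
    replace a with (4 * 2 ^ n)%nat by (simpl in E; lia).
    apply Cl_csub; auto; apply (Cl_pow4 _ _ mu0); auto.
  - assert (Hk3 : (3 <= k)%nat).
    { destruct k as [|[|[|k]]]; try lia; discriminate. }
    exists ((3 * k + 1) * 2 ^ n)%nat. split; [nia|].
    subst a. apply (Cl_pair _ _ mu0); auto; apply Hb; lia.
Qed.

Lemma avg omega mu0 P delta : Hyp omega mu0 P delta -> forall N a, (3 <= a)%nat ->
  exists S, inX omega S /\ nrm2 omega S <= INR N / delta /\ (forall n, (n < a)%nat -> S n = 0%C) /\
    Cl omega P (csub (vscal (RtoC (INR N)) (ej a)) S).
Proof.
  intros HH. destruct HH as (Hp & Hd & Hdl & Hm & Hb & HP) eqn:HH'. clear HH'.
  induction N; intros a Ha.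
  - exists vzero. split; [apply inX_zero|]. split; [rewrite nrm2_zero; simpl; unfold Rdiv; lra|].
    split; [reflexivity|].
    apply (Cl_ext _ _ vzero); [intros n; unfold csub, vscal, vzero; simpl; ring|].
    apply Cl_span; auto. apply span_zero.
  - destruct (step omega mu0 P delta a HH Ha) as [b [Hab Hcl]].
    destruct (IHN b) as [S [HS1 [HS2 [HS3 HS4]]]]; [lia|].
    exists (vadd (ej a) S). split; [apply inX_add; auto; apply ej_inX; auto|].
    split.
    + assert (E : forall n, wterm omega (vadd (ej a) S) n = wterm omega (ej a) n + wterm omega S n).
      { intros n. unfold wterm, vadd, ej. destruct (n =? a)%nat eqn:En.
        - apply Nat.eqb_eq in En. subst n. rewrite HS3 by lia. rewrite Cplus_0_r, Cmod_0.
          destruct (3 <=? a)%nat; simpl; unfold Rdiv; ring.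
        - rewrite Cplus_0_l. destruct (3 <=? n)%nat; [rewrite Cmod_0|]; simpl; unfold Rdiv; ring. }
      unfold nrm2. rewrite (Series_ext _ _ E). rewrite Series_plus.
      * fold (nrm2 omega (ej a)) (nrm2 omega S). rewrite nrm2_ej by auto.
        assert (/ omega a <= / delta) by (apply Rinv_le_contravar; auto; apply Hdl; lia).
        rewrite S_INR. unfold Rdiv in *. rewrite Rmult_plus_distr_r. lra.
      * apply ej_inX; auto.
      * apply HS1.
    + split.
      * intros n Hn. unfold vadd, ej. rewrite HS3 by lia.
        replace (n =? a)%nat with false by (symmetry; apply Nat.eqb_neq; lia). ring.
      * apply (Cl_ext _ _ (vadd (vscal (RtoC (INR N)) (csub (ej a) (ej b))) (csub (vscal (RtoC (INR N)) (ej b)) S))).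
        -- intros n. unfold vadd, vscal, csub. rewrite S_INR, RtoC_plus. ring.
        -- apply Cl_add; auto. apply Cl_scal; auto.
Qed.

Lemma Cl_ej omega mu0 P delta a : Hyp omega mu0 P delta -> (3 <= a)%nat -> Cl omega P (ej a).
Proof.
  intros HH Ha. destruct HH as (Hp & Hd & Hdl & Hm & Hb & HP) eqn:HH'. clear HH'.
  apply Cl_lim; auto; [apply ej_inX; auto|].
  intros eps He.
  destruct (INR_unbounded (/ (delta * eps))) as [N HN].
  assert (HN0 : 0 < INR N).
  { eapply Rlt_trans; [|apply HN]. apply Rinv_0_lt_compat, Rmult_lt_0_compat; auto. }
  destruct (avg omega mu0 P delta HH N a Ha) as [S [HS1 [HS2 [HS3 HS4]]]].
  exists (vscal (RtoC (/ INR N)) (csub (vscal (RtoC (INR N)) (ej a)) S)). split.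
  - apply Cl_scal; auto.
  - rewrite (nrm2_ext _ _ (vscal (RtoC (/ INR N)) S)).
    + rewrite nrm2_scal, Cmod_R, Rabs_pos_eq by (left; apply Rinv_0_lt_compat; auto).
      apply Rle_lt_trans with ((/ INR N) ^ 2 * (INR N / delta)).
      * apply Rmult_le_compat_l; auto. apply pow_le. left; apply Rinv_0_lt_compat; auto.
      * replace ((/ INR N) ^ 2 * (INR N / delta)) with (/ (INR N * delta)) by (field; lra).
        apply (Rmult_lt_reg_l (INR N * delta)); [apply Rmult_lt_0_compat; auto|].
        rewrite Rinv_r by (apply Rgt_not_eq, Rmult_lt_0_compat; auto).
        apply (Rmult_lt_compat_l (delta * eps)) in HN; [|apply Rmult_lt_0_compat; auto].
        rewrite Rinv_r in HN by (apply Rgt_not_eq, Rmult_lt_0_compat; auto). nra.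
    + intros n. unfold csub, vscal. rewrite RtoC_inv by lra.
      assert (RtoC (INR N) <> 0%C) by (apply RtoC_neq0; lra). field. auto.
Qed.

Definition tr (M : nat) (f : nat -> C) : nat -> C := fun n => if (n <=? M)%nat then f n else 0%C.

Lemma Cl_tr omega mu0 P delta f : Hyp omega mu0 P delta -> inX omega f -> forall M, Cl omega P (tr M f).
Proof.
  intros HH Hf. destruct HH as (Hp & Hd & Hdl & Hm & Hb & HP) eqn:HH'. clear HH'.
  destruct Hf as [Hf0 Hf1].
  induction M.
  - apply (Cl_ext _ _ vzero); [|apply Cl_span; auto; apply span_zero].
    intros n. unfold tr, vzero. destruct (n <=? 0)%nat eqn:E; auto.
    apply Nat.leb_le in E. rewrite Hf0 by lia. reflexivity.
  - destruct (le_lt_dec 3 (S M)) as [H3|H3].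
    + apply (Cl_ext _ _ (vadd (tr M f) (vscal (f (S M)) (ej (S M))))).
      * intros n. unfold tr, vadd, vscal, ej. destruct (n =? S M)%nat eqn:E.
        -- apply Nat.eqb_eq in E. subst n.
           replace (S M <=? M)%nat with false by (symmetry; apply Nat.leb_gt; lia).
           rewrite Nat.leb_refl. ring.
        -- apply Nat.eqb_neq in E. destruct (n <=? M)%nat eqn:E1.
           ++ apply Nat.leb_le in E1. replace (n <=? S M)%nat with true by (symmetry; apply Nat.leb_le; lia). ring.
           ++ apply Nat.leb_gt in E1. replace (n <=? S M)%nat with false by (symmetry; apply Nat.leb_gt; lia). ring.
      * apply Cl_add; auto. apply Cl_scal; auto. eapply Cl_ej; eauto.
    + apply (Cl_ext _ _ (tr M f)); auto.
      intros n. unfold tr. destruct (n =? S M)%nat eqn:E.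
      * apply Nat.eqb_eq in E. subst n.
        replace (S M <=? M)%nat with false by (symmetry; apply Nat.leb_gt; lia).
        rewrite Nat.leb_refl. rewrite Hf0 by lia. reflexivity.
      * apply Nat.eqb_neq in E. destruct (n <=? M)%nat eqn:E1.
        -- apply Nat.leb_le in E1. replace (n <=? S M)%nat with true by (symmetry; apply Nat.leb_le; lia). auto.
        -- apply Nat.leb_gt in E1. replace (n <=? S M)%nat with false by (symmetry; apply Nat.leb_gt; lia). auto.
Qed.

Lemma Cl_all omega mu0 P delta f : Hyp omega mu0 P delta -> inX omega f -> Cl omega P f.
Proof.
  intros HH Hf. destruct HH as (Hp & Hd & Hdl & Hm & Hb & HP) eqn:HH'. clear HH'.
  apply Cl_lim; auto. intros eps He.
  destruct (tail_spec (wterm omega f)) with (eps := eps) as [L HL]; auto.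
  { intros; apply wterm_nonneg; auto. }
  { apply Hf. }
  exists (tr L f). split; [eapply Cl_tr; eauto|].
  destruct (HL L) as [_ H]; auto.
  unfold nrm2. rewrite (Series_ext _ (tailR L (wterm omega f))); auto.
  intros n. unfold wterm, tailR, csub, tr. destruct (n <=? L)%nat.
  - replace (f n - f n)%C with (RtoC 0) by ring. rewrite Cmod_0.
    destruct (3 <=? n)%nat; simpl; unfold Rdiv; ring.
  - replace (f n - 0)%C with (f n) by ring. reflexivity.
Qed.

Lemma dense_main omega mu0 P delta : Hyp omega mu0 P delta -> dense_in_X omega (in_eigspan omega P).
Proof.
  intros HH f Hf eps He.
  destruct (Cl_all omega mu0 P delta f HH Hf) as [_ H].
  destruct (H (eps ^ 2)) as [g [Hg Hn]]; [apply pow_lt; auto|].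
  exists g. split; auto. unfold wnorm. fold (nrm2 omega (csub f g)).
  destruct HH as (Hp & _).
  rewrite <- (sqrt_pow2 eps) by lra. apply sqrt_lt_1; auto; [|apply pow2_ge_0].
  apply nrm2_nonneg; auto. apply inX_csub; auto. eapply span_inX; eauto.
Qed.
Lemma pow_sq_swap x n : (x ^ n) ^ 2 = (x ^ 2) ^ n.
Proof. rewrite <- !pow_mult. f_equal. lia. Qed.

Lemma GS_general omega :
  (forall n, (1 <= n)%nat -> 0 < omega n) ->
  (exists delta, 0 < delta /\ forall n, (1 <= n)%nat -> delta <= omega n) ->
  (exists rho, 1 < rho /\
     forall k, (3 <= k)%nat -> exists B, forall n : nat, rho ^ n / omega (k * 2 ^ n)%nat <= B) ->
  godefroy_shapiro omega.
Proof.
  intros Hp [delta [Hd Hdl]] [rho [Hr HB]].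
  assert (Hw : forall a n, (3 <= a)%nat -> 0 < omega (a * 2 ^ n)%nat).
  { intros a n Ha. apply Hp. pose proof (pow2_pos n). nia. }
  split.
  - apply (dense_main omega (/ 2) _ delta).
    repeat split; auto; try lra.
    + intros a Ha. apply (exR_le _ (fun n => / delta * (/ 4) ^ n)).
      * intros n. split; [apply beta_nonneg; auto; lia|].
        unfold beta. rewrite pow_sq_swap. replace ((/ 2) ^ 2) with (/ 4) by field.
        unfold Rdiv. rewrite Rmult_comm. apply Rmult_le_compat_r; [apply pow_le; lra|].
        apply Rinv_le_contravar; auto. apply Hdl. pose proof (pow2_pos n). nia.
      * apply exR_scal. apply ex_series_geom. rewrite Rabs_pos_eq; lra.
    + intros mu Hmu. rewrite Hmu. lra.
  - set (mu0 := sqrt ((1 + rho) / 2)).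
    assert (Hm2 : mu0 ^ 2 = (1 + rho) / 2) by (unfold mu0; rewrite pow2_sqrt; lra).
    assert (Hm1 : 1 < mu0).
    { unfold mu0. rewrite <- sqrt_1 at 1. apply sqrt_lt_1; lra. }
    apply (dense_main omega mu0 _ delta).
    repeat split; auto; try lra.
    + intros a Ha. destruct (HB a Ha) as [B HB'].
      set (q := (1 + rho) / (2 * rho)).
      assert (Hq : 0 < q < 1) by (unfold q; split; [apply Rdiv_lt_0_compat|apply (Rmult_lt_reg_r (2 * rho)); [|unfold Rdiv; rewrite Rmult_assoc, Rinv_l]]; lra).
      apply (exR_le _ (fun n => B * q ^ n)).
      * intros n. split; [apply beta_nonneg; auto; lia|].
        unfold beta. rewrite pow_sq_swap, Hm2.
        replace ((1 + rho) / 2) with (q * rho) by (unfold q; field; lra).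
        rewrite Rpow_mult_distr. unfold Rdiv. rewrite Rmult_assoc, (Rmult_comm B).
        apply Rmult_le_compat_l; [apply pow_le; lra|]. apply HB'.
      * apply exR_scal. apply ex_series_geom. rewrite Rabs_pos_eq; lra.
    + intros mu Hmu. rewrite Hmu. lra.
Qed.

Theorem theorem3p6 :
  (forall omega : nat -> R,
     (forall n, (1 <= n)%nat -> 0 < omega n) ->
     (exists delta, 0 < delta /\ forall n, (1 <= n)%nat -> delta <= omega n) ->
     T_bounded omega ->
     (exists rho, 1 < rho /\
        forall k, (3 <= k)%nat -> exists B, forall n : nat,
          rho ^ n / omega (k * 2 ^ n)%nat <= B) ->
     godefroy_shapiro omega)
  /\ godefroy_shapiro omega0.
Proof.
  split.
  - intros omega H1 H2 _ H3. apply GS_general; auto.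
  - pose proof PI_RGT_0 as Hpi. apply GS_general.
    + intros n _. unfold omega0. apply Rdiv_lt_0_compat; [|lra]. pose proof (pos_INR n). lra.
    + exists (/ PI). split; [apply Rinv_0_lt_compat; lra|].
      intros n _. unfold omega0. unfold Rdiv. rewrite <- (Rmult_1_l (/ PI)) at 1.
      apply Rmult_le_compat_r; [left; apply Rinv_0_lt_compat; lra|]. pose proof (pos_INR n). lra.
    + exists 2. split; [lra|]. intros k Hk. exists PI. intros n.
      unfold omega0. rewrite mult_INR, pow_INR. replace (INR 2) with 2 by (simpl; ring).
      assert (H2n : 0 < 2 ^ n) by (apply pow_lt; lra).
      assert (Hk' : 3 <= INR k) by (replace 3 with (INR 3) by (simpl; ring); apply le_INR; auto).
      assert (Hden : 0 < INR k * 2 ^ n + 1) by nra.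
      replace (2 ^ n / ((INR k * 2 ^ n + 1) / PI)) with (PI * (2 ^ n / (INR k * 2 ^ n + 1))) by (field; lra).
      apply Rle_trans with (PI * 1); [|lra]. apply Rmult_le_compat_l; [lra|].
      apply (Rmult_le_reg_r (INR k * 2 ^ n + 1)); auto.
      unfold Rdiv. rewrite Rmult_assoc, Rinv_l by lra. nra.
Qed.
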